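(* Let $\alpha\in\ell^2$. For every $p>0$ there exists a constant $C_p$ depending only on $p$ such that $$\|(\sigma_k)_{k\in\mathbb{N}}\|_{\ell^p}\le C_p\,\|(a_k(R_\alpha))_{k\ge1}\|_{\ell^p},$$ where the $\ell^p$-(quasi)norms may be infinite.
   Context: $\mathbb{N}=\{0,1,2,\dots\}$; $(R_\alpha f)(k)=\alpha_k\sum_{j=0}^kf(j)$ on $\ell^2$ (square-summable functions $\mathbb{N}\to\mathbb{C}$). $\sigma_k=(\sum_{j=2^k}^{2^{k+1}-1}(j+1)|\alpha_j|^2)^{1/2}$. Approximation numbers: $a_{n+1}(T)=\inf\{\|T-P\|:P$ linear with rank $\le n\}$, $n\ge0$. *)

(* Defs.v *)
From HB Require Import structures.
From mathcomp Require Import all_boot all_order all_algebra.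
From mathcomp Require Import all_classical all_reals all_analysis.
From mathcomp Require Import complex.
Set Implicit Arguments. Unset Strict Implicit. Unset Printing Implicit Defensive.
Import Order.TTheory GRing.Theory Num.Theory.
Local Open Scope ring_scope.
Local Open Scope classical_set_scope.

Section Defs.
Variable R : realType.

Definition cseq := nat -> R[i].

Definition cmod2 (z : R[i]) : R := (complex.Re z) ^+ 2 + (complex.Im z) ^+ 2.

Definition sqnorm (f : cseq) : \bar R :=
  (\sum_(0 <= k <oo) (cmod2 (f k))%:E)%E.

Definition inl2 (f : cseq) : Prop := (sqnorm f < +oo)%E.

Definition Ralpha (alpha : cseq) (f : cseq) : cseq :=
  fun k => alpha k * \sum_(0 <= j < k.+1) f j.

Definition l2_linear (P : cseq -> cseq) : Prop :=
  (forall f, inl2 f -> inl2 (P f)) /\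
  (forall f g, inl2 f -> inl2 g -> P (f \+ g) = P f \+ P g) /\
  (forall (c : R[i]) f, inl2 f -> P (fun k => c * f k) = (fun k => c * P f k)).

Definition rank_le (P : cseq -> cseq) (n : nat) : Prop :=
  exists g : 'I_n -> cseq, (forall i, inl2 (g i)) /\
    forall f, inl2 f -> exists c : 'I_n -> R[i],
      P f = (fun k => \sum_(i < n) c i * g i k).

Definition opnorm (T : cseq -> cseq) : \bar R :=
  ereal_sup [set poweR (sqnorm (T f)) (2^-1) | f in [set f | inl2 f /\ (sqnorm f <= 1)%E]].

(* approximation numbers: approx_num T n = a_{n+1}(T)
   = inf { ||T - P|| : P linear with rank <= n } *)
Definition approx_num (T : cseq -> cseq) (n : nat) : \bar R :=
  ereal_inf [set opnorm (fun f => T f \- P f) | P in [set P | l2_linear P /\ rank_le P n]].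

Definition sigma (alpha : cseq) (k : nat) : R :=
  Num.sqrt (\sum_(2 ^ k <= j < 2 ^ k.+1) (j.+1)%:R * cmod2 (alpha j)).

Definition lpnorm (p : R) (x : nat -> \bar R) : \bar R :=
  poweR (\sum_(0 <= k <oo) poweR (x k) p)%E p^-1.

End Defs.

(* Main.v *)
Require Import Defs.
From HB Require Import structures.
From mathcomp Require Import all_boot all_order all_algebra.
From mathcomp Require Import all_classical all_reals all_analysis.
From mathcomp Require Import complex.
From mathcomp Require Import ring lra zify.
Import Order.TTheory GRing.Theory Num.Theory.
Local Open Scope ring_scope.

Module PartA.
Local Open Scope ring_scope.
Local Open Scope complex_scope.

Section A.
Variable R : realType.
Local Notation C := R[i].
Implicit Types z w : C.

Lemma cmod2E z : (cmod2 z)%:C = z * conjc z.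
Proof.
case: z => a b; rewrite /cmod2 /=.
apply/eqP; rewrite eq_complex /=; apply/andP; split; apply/eqP.
  by rewrite !expr2 mulrN opprK.
by rewrite mulrN mulrC addNr.
Qed.

Lemma cmod2_ge0 z : 0 <= cmod2 z.
Proof. by rewrite /cmod2 addr_ge0 // sqr_ge0. Qed.

Lemma cmod2M z w : cmod2 (z * w) = cmod2 z * cmod2 w.
Proof.
apply: (@complexI R); rewrite rmorphM /= !cmod2E rmorphM /=; ring.
Qed.

Lemma cmod2_eq0 z : cmod2 z = 0 -> z = 0.
Proof.
case: z => a b; rewrite /cmod2 /= => h.
have ha : a ^+ 2 = 0.
  apply/eqP; rewrite eq_le sqr_ge0 andbT -h lerDl sqr_ge0 //.
have hb : b ^+ 2 = 0 by move: h; rewrite ha add0r.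
move/eqP: ha; rewrite sqrf_eq0 => /eqP ->.
by move/eqP: hb; rewrite sqrf_eq0 => /eqP ->.
Qed.

Lemma cmod2_real (r : R) : cmod2 r%:C = r ^+ 2.
Proof. by rewrite /cmod2 /= expr0n /= addr0. Qed.

Lemma cmod2_nat (n : nat) : cmod2 (n%:R : C) = (n%:R : R) ^+ 2.
Proof.
have -> : (n%:R : C) = (n%:R : R)%:C by rewrite rmorph_nat.
exact: cmod2_real.
Qed.

Lemma cmod2N z : cmod2 (- z) = cmod2 z.
Proof. by case: z => a b; rewrite /cmod2 /= !sqrrN. Qed.

Lemma CS_aux (I : Type) (r : seq I) (a y : I -> C) :
  0 <= (\sum_(i <- r) cmod2 (a i)) *
     ((\sum_(i <- r) cmod2 (a i)) * (\sum_(i <- r) cmod2 (y i))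
       - cmod2 (\sum_(i <- r) conjc (a i) * y i)).
Proof.
set A := \sum_(i <- r) cmod2 (a i).
set Y := \sum_(i <- r) cmod2 (y i).
set L := \sum_(i <- r) conjc (a i) * y i.
have key : (A * (A * Y - cmod2 L))%:C =
  \sum_(i <- r) ((A%:C * y i - L * a i) * conjc (A%:C * y i - L * a i)).
  have eA : A%:C = \sum_(i <- r) a i * conjc (a i).
    by rewrite /A rmorph_sum; apply: eq_bigr => i _; exact: cmod2E.
  have eY : Y%:C = \sum_(i <- r) y i * conjc (y i).
    by rewrite /Y rmorph_sum; apply: eq_bigr => i _; exact: cmod2E.
  have eL' : conjc L = \sum_(i <- r) a i * conjc (y i).
    rewrite /L rmorph_sum; apply: eq_bigr => i _.
    by rewrite rmorphM /= conjcK mulrC.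
  have eL : L = \sum_(i <- r) y i * conjc (a i).
    by apply: eq_bigr => i _; rewrite mulrC.
  have cA : conjc (A%:C) = A%:C by rewrite conjc_real.
  have cM : forall u w : C, conjc (u * w) = conjc u * conjc w.
    by move=> u w; exact: rmorphM.
  have cB : forall u w : C, conjc (u - w) = conjc u - conjc w.
    by move=> u w; exact: rmorphB.
  transitivity (\sum_(i <- r) (A%:C * A%:C * (y i * conjc (y i))
     - A%:C * conjc L * (y i * conjc (a i)) - A%:C * L * (a i * conjc (y i))
     + L * conjc L * (a i * conjc (a i)))); last first.
    apply: eq_bigr => i _.
    rewrite cB !cM cA; ring.
  rewrite !big_split /= !sumrN -!mulr_sumr -eY -eA -eL -eL'.
  have rM : forall u w : R, (u * w)%:C = u%:C * w%:C.
    by move=> u w; exact: rmorphM.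
  have rB : forall u w : R, (u - w)%:C = u%:C - w%:C.
    by move=> u w; exact: rmorphB.
  rewrite rM rB rM cmod2E.
  ring.
rewrite -ler0c key; apply: sumr_ge0 => i _; exact: mulcJ_ge0.
Qed.


Lemma count_nat (n a b : nat) : (a <= b)%N ->
  (\sum_(0 <= i < n) ((a <= i) && (i < b) : nat))%N = (minn n b - minn n a)%N.
Proof.
move=> ab; elim: n => [|n IH]; first by rewrite big_nil; lia.
rewrite big_nat_recr //= IH.
case: (leqP a n) => /= ha; case: (ltnP n b) => /= hb; lia.
Qed.

Lemma sqnorm_supp (f : cseq R) M : (forall j, (M <= j)%N -> f j = 0) ->
  sqnorm f = (\sum_(0 <= j < M) cmod2 (f j))%:E.
Proof.
move=> hf; rewrite /sqnorm (@nneseries_split _ _ 0 M); last by move=> k _; rewrite lee_fin cmod2_ge0.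
rewrite add0n eseries0 ?adde0; last by move=> i hi _; rewrite hf // /cmod2 /= expr0n /= addr0.
by rewrite sumEFin.
Qed.

Lemma inl2_supp (f : cseq R) M : (forall j, (M <= j)%N -> f j = 0) -> inl2 f.
Proof. by move=> hf; rewrite /inl2 (sqnorm_supp _ _ hf) ltry. Qed.

Lemma sqnorm_ge (f : cseq R) M :
  ((\sum_(0 <= j < M) cmod2 (f j))%:E <= sqnorm f)%E.
Proof.
rewrite -sumEFin; apply: nneseries_lim_ge => k _ _; rewrite lee_fin; exact: cmod2_ge0.
Qed.

Lemma poweR_le (x y : \bar R) (r : R) : 0 <= r -> (0 <= x)%E -> (x <= y)%E ->
  (poweR x r <= poweR y r)%E.
Proof.
move=> r0 x0 xy.
have hy : (poweR +oo r = if r == 0%R then 1 else +oo)%E by [].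
case: y xy => [y| |] xy.
- case: x x0 xy => [x| |] //= x0 xy; rewrite lee_fin.
  rewrite !lee_fin in x0 xy.
  by apply: ge0_ler_powR => //; rewrite nnegrE // (le_trans x0 xy).
- rewrite hy; case: (eqVneq r 0) => [->|rn0]; last by rewrite leey.
  by rewrite poweRe0.
- by case: x x0 xy.
Qed.

Lemma sum_excl (I : finType) (Q : I -> bool) :
  (forall i i', i != i' -> Q i -> Q i' -> False) ->
  \sum_(i : I) (Q i)%:R <= (1 : R).
Proof.
move=> hex; case: (pickP Q) => [i0 hi0|hn].
  rewrite (bigD1 i0) //= big1 ?addr0 ?hi0 //.
  move=> i hi; case hQ: (Q i) => //; exfalso; exact: (hex i i0 hi hQ hi0).
by rewrite big1 // => i _; rewrite hn.
Qed.

Lemma cmod2_sum_excl (I : finType) (h : I -> C) :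
  (forall i i', i != i' -> h i != 0 -> h i' != 0 -> False) ->
  cmod2 (\sum_(i : I) h i) = \sum_(i : I) cmod2 (h i).
Proof.
move=> hex; case: (pickP (fun i => h i != 0)) => [i0 hi0|hn].
  rewrite (bigD1 i0) //= big1 ?addr0; last first.
    move=> i hi; apply/eqP; apply: contraT => hne; exfalso; exact: (hex i i0 hi hne hi0).
  rewrite [in RHS](bigD1 i0) //= big1 ?addr0 //.
  move=> i hi; case: (eqVneq (h i) 0) => [->|hne]; first by rewrite /cmod2 /= expr0n /= addr0.
  exfalso; exact: (hex i i0 hi hne hi0).
rewrite !big1 //; first by rewrite /cmod2 /= expr0n /= addr0.
  by move=> i _; move/negbFE/eqP: (hn i) => ->; rewrite /cmod2 /= expr0n /= addr0.
by move=> i _; move/negbFE/eqP: (hn i).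
Qed.

Lemma lin_sum (P : cseq R -> cseq R) (I : Type) (s : seq I) (v : I -> C) (h : I -> cseq R) M :
  l2_linear P -> (forall i j, (M <= j)%N -> h i j = 0) ->
  P (fun j => \sum_(i <- s) v i * h i j) = (fun j => \sum_(i <- s) v i * P (h i) j).
Proof.
move=> [_ [hadd hsc]] hsupp.
have z0 : inl2 (fun _ : nat => (0 : C)) by apply: (@inl2_supp _ 0).
elim: s => [|i s IH].
  have H := hsc 0 (fun _ => 0) z0.
  have e1 : (fun k : nat => (0:C) * (fun _ => 0) k) = (fun _ => 0).
    by apply: funext => k; rewrite mul0r.
  have e2 : (fun k => (0:C) * P (fun _ => 0) k) = (fun _ => 0).
    by apply: funext => k; rewrite mul0r.
  rewrite e1 e2 in H.
  have e3 : (fun j => \sum_(i <- [::]) v i * h i j) = (fun _ => 0).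
    by apply: funext => j; rewrite big_nil.
  rewrite e3 H; apply: funext => j; by rewrite big_nil.
have -> : (fun j => \sum_(k <- i :: s) v k * h k j) =
   (fun j => v i * h i j) \+ (fun j => \sum_(k <- s) v k * h k j).
  by apply: funext => j; rewrite big_cons.
rewrite hadd; last 2 first.
- by apply: (@inl2_supp _ M) => j hj; rewrite hsupp // mulr0.
- by apply: (@inl2_supp _ M) => j hj; rewrite big1 // => k _; rewrite hsupp // mulr0.
apply: funext => j; rewrite big_cons /=; congr (_ + _).
  by rewrite (hsc (v i) (h i)) //; apply: (@inl2_supp _ M) => j' hj; rewrite hsupp.
exact: (congr1 (fun F => F j) IH).
Qed.

End A.

End PartA.
Import PartA.

Module PartB.
Local Open Scope ring_scope.
Local Open Scope complex_scope.

Definition hh k := (2^k)./2.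
Definition bb k := (2^k - hh k)%N.
Definition sep (k k' : nat) := ((k + 3 <= k') || (k' + 3 <= k))%N.

Lemma hh_spec k : (2^k = hh k + hh k + odd (2^k))%N.
Proof. have := odd_double_half (2^k); rewrite -addnn /hh; lia. Qed.

Lemma pow_pos k : (0 < 2^k)%N.
Proof. by rewrite expn_gt0. Qed.

Lemma odd_le1 n : (odd n <= 1)%N.
Proof. by case: (odd n). Qed.

Lemma pow_mono k k' : (k <= k')%N -> (2^k <= 2^k')%N.
Proof. by move=> h; rewrite leq_pexp2l. Qed.

Lemma powS k : (2^k.+1 = 2 * 2^k)%N.
Proof. by rewrite expnS. Qed.

Lemma pow_facts k : [/\ (hh k + hh k <= 2^k)%N, (2^k <= hh k + hh k + 1)%N,
   (0 < 2^k)%N, (2^k.+1 = 2 * 2^k)%N & (2^k.+2 = 4 * 2^k)%N].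
Proof.
have := hh_spec k; have := odd_le1 (2^k); have := pow_pos k.
by rewrite !expnS; split; lia.
Qed.

Section B.
Variable R : realType.
Local Notation C := R[i].

Definition fk (k : nat) : cseq R := fun j =>
  (((hh k <= j) && (j < 2^k))%N : nat)%:R - (((2^k.+1 <= j) && (j < 2^k.+1 + bb k))%N : nat)%:R.

Lemma Fk_eq k j : \sum_(0 <= i < j.+1) fk k i =
  ((minn j.+1 (2^k) - minn j.+1 (hh k))%N%:R
    - (minn j.+1 (2^k.+1 + bb k) - minn j.+1 (2^k.+1))%N%:R : C).
Proof.
rewrite /fk sumrB -!natr_sum !count_nat //.
  by rewrite leq_addr.
by have [? ? ? ? ?] := pow_facts k; rewrite /hh; lia.
Qed.


Lemma Fk_blk k j : (2^k <= j < 2^k.+1)%N -> \sum_(0 <= i < j.+1) fk k i = (bb k)%:R.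
Proof.
move=> hj; rewrite Fk_eq.
have [? ? ? ? ?] := pow_facts k.
have -> : (minn j.+1 (2^k) - minn j.+1 (hh k) = bb k)%N by rewrite /bb; lia.
have -> : (minn j.+1 (2^k.+1 + bb k) - minn j.+1 (2^k.+1) = 0)%N by lia.
by rewrite subr0.
Qed.

Lemma Fk_far k j : (2^k.+2 <= j)%N -> \sum_(0 <= i < j.+1) fk k i = 0.
Proof.
move=> hj; rewrite Fk_eq.
have [? ? ? ? ?] := pow_facts k.
have -> : (minn j.+1 (2^k) - minn j.+1 (hh k) = bb k)%N by rewrite /bb; lia.
have -> : (minn j.+1 (2^k.+1 + bb k) - minn j.+1 (2^k.+1) = bb k)%N by rewrite /bb; lia.
by rewrite subrr.
Qed.

Lemma Fk_near k j : (j.+1 <= hh k)%N -> \sum_(0 <= i < j.+1) fk k i = 0.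
Proof.
move=> hj; rewrite Fk_eq.
have [? ? ? ? ?] := pow_facts k.
have -> : (minn j.+1 (2^k) - minn j.+1 (hh k) = 0)%N by lia.
have -> : (minn j.+1 (2^k.+1 + bb k) - minn j.+1 (2^k.+1) = 0)%N by lia.
by rewrite subrr.
Qed.

Lemma Fk_other k k' j : sep k k' -> (2^k' <= j < 2^k'.+1)%N ->
  \sum_(0 <= i < j.+1) fk k i = 0.
Proof.
move=> /orP[h|h] hj.
  apply: Fk_far; apply: leq_trans (proj1 (andP hj)); apply: pow_mono; lia.
apply: Fk_near.
have h1 : (2^k'.+3 <= 2^k)%N by apply: pow_mono; lia.
have [? ? ? ? ?] := pow_facts k; have [? ? ? ? ?] := pow_facts k'.
move: h1; rewrite !expnS; lia.
Qed.

Lemma fk_supp k j : fk k j != 0 -> (hh k <= j < 2^k.+2)%N.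
Proof.
rewrite /fk; have [? ? ? ? ?] := pow_facts k.
case: (leqP (hh k) j) => h1; case: (ltnP j (2^k)) => h2;
  case: (leqP (2^k.+1) j) => h3; case: (ltnP j (2^k.+1 + bb k)) => h4 //=;
  rewrite ?subrr ?eqxx //; move=> _; rewrite /bb in h4; lia.
Qed.

Lemma fk_zero k j : (2^k.+2 <= j)%N -> fk k j = 0.
Proof.
move=> h; apply/eqP; apply: contraT => /fk_supp; lia.
Qed.

Lemma fk_disj k k' j : sep k k' -> fk k j != 0 -> fk k' j != 0 -> False.
Proof.
move=> hs /fk_supp h1 /fk_supp h2.
have [? ? ? ? ?] := pow_facts k; have [? ? ? ? ?] := pow_facts k'.
move: hs => /orP[h|h].
  have h3 : (2^k.+3 <= 2^k')%N by apply: pow_mono; lia.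
  move: h3; rewrite !expnS; lia.
have h3 : (2^k'.+3 <= 2^k)%N by apply: pow_mono; lia.
move: h3; rewrite !expnS; lia.
Qed.

Lemma cmod2_ind (a b : bool) : cmod2 ((a : nat)%:R - (b : nat)%:R : C) <= (a : nat)%:R + (b : nat)%:R.
Proof.
have c0 : cmod2 (0 : C) = 0 by rewrite /cmod2 /= expr0n /= addr0.
have c1 : cmod2 (1 : C) = 1 by rewrite /cmod2 /= expr0n /= addr0 expr1n.
case: a; case: b => /=; rewrite ?subrr ?subr0 ?sub0r ?cmod2N ?c0 ?c1 //; lra.
Qed.

Lemma fk_norm k M : \sum_(0 <= j < M) cmod2 (fk k j) <= 2 * (bb k)%:R.
Proof.
apply: le_trans (_ : \sum_(0 <= j < M)
   (((((hh k <= j) && (j < 2^k))%N : nat)%:R : R) + ((((2^k.+1 <= j) && (j < 2^k.+1 + bb k))%N : nat)%:R)) <= _).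
  by apply: ler_sum => j _; apply: cmod2_ind.
have [? ? ? ? ?] := pow_facts k.
rewrite big_split /= -!natr_sum !count_nat //; try lia.
rewrite -natrD -natrM ler_nat /bb; lia.
Qed.

End B.

End PartB.
Import PartB.

Module PartCc.
Local Open Scope ring_scope.
Local Open Scope complex_scope.

Section Cc.
Variable R : realType.
Local Notation C := R[i].
Variable alpha : cseq R.

Definition Ablk k := \sum_(2^k <= j < 2^k.+1) cmod2 (alpha j).
Definition Lf k (y : cseq R) : C := \sum_(2^k <= j < 2^k.+1) conjc (alpha j) * y j.
Definition Yblk k (y : cseq R) : R := \sum_(2^k <= j < 2^k.+1) cmod2 (y j).

Lemma Ablk_ge0 k : 0 <= Ablk k.
Proof. by apply: sumr_ge0 => j _; exact: cmod2_ge0. Qed.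

Lemma Yblk_ge0 k y : 0 <= Yblk k y.
Proof. by apply: sumr_ge0 => j _; exact: cmod2_ge0. Qed.

Lemma Lf_lin k (I : Type) (s : seq I) (c : I -> C) (g : I -> cseq R) :
  Lf k (fun j => \sum_(i <- s) c i * g i j) = \sum_(i <- s) c i * Lf k (g i).
Proof.
rewrite /Lf; under eq_bigr do rewrite mulr_sumr.
rewrite exchange_big /=; apply: eq_bigr => i _.
rewrite mulr_sumr; apply: eq_bigr => j _; ring.
Qed.

Lemma LfB k (a b : cseq R) : Lf k (fun j => a j - b j) = Lf k a - Lf k b.
Proof. by rewrite /Lf -sumrB; apply: eq_bigr => j _; ring. Qed.

Lemma blk_lower k (y : cseq R) (t : C) : Lf k y = t * (Ablk k)%:C ->
  cmod2 t * Ablk k <= Yblk k y.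
Proof.
move=> hL.
have := @CS_aux R _ (index_iota (2^k) (2^k.+1)) alpha y.
rewrite -/(Lf k y) -/(Ablk k) -/(Yblk k y) hL cmod2M cmod2_real.
have hA := Ablk_ge0 k; have hY := Yblk_ge0 k y; have ht := @cmod2_ge0 R t.
case: (eqVneq (Ablk k) 0) => [->|hA0]; first by rewrite mulr0.
have hA' : 0 < Ablk k by rewrite lt_def hA0 hA.
move=> h.
have h2 : 0 <= Ablk k * Ablk k * (Yblk k y - cmod2 t * Ablk k).
  by move: h; congr (_ <= _); ring.
rewrite -subr_ge0; move: h2; rewrite pmulr_rge0 //; exact: mulr_gt0.
Qed.

Lemma sigma_bound k : sigma alpha k ^+ 2 <= 4 * (bb k)%:R * Ablk k.
Proof.
rewrite /sigma sqr_sqrtr; last by apply: sumr_ge0 => j _; rewrite mulr_ge0 ?cmod2_ge0.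
apply: le_trans (_ : \sum_(2^k <= j < 2^k.+1) (2^k.+1)%:R * cmod2 (alpha j) <= _).
  apply: ler_sum_nat => j /andP[_ hj]; apply: ler_wpM2r; first exact: cmod2_ge0.
  by rewrite ler_nat.
rewrite -mulr_sumr -/(Ablk k); apply: ler_wpM2r; first exact: Ablk_ge0.
have [? ? ? ? ?] := pow_facts k.
by rewrite -natrM ler_nat /bb; lia.
Qed.

End Cc.

End PartCc.
Import PartCc.

Module PartD.
Local Open Scope ring_scope.
Local Open Scope complex_scope.

Lemma sum_ind (R : realType) (F : nat -> R) a b M : (a <= b)%N -> (b <= M)%N ->
  \sum_(a <= j < b) F j = \sum_(0 <= j < M) (((a <= j) && (j < b))%N : nat)%:R * F j.
Proof.
move=> ab bM.
set G := fun j => (((a <= j) && (j < b))%N : nat)%:R * F j.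
rewrite (@big_cat_nat _ _ _ b 0 M) //= (@big_cat_nat _ _ _ a 0 b) //=.
have e1 : \sum_(0 <= j < a) G j = 0.
  rewrite big_nat big1 // => j /andP[_ h].
  have hf : ~~ ((a <= j) && (j < b))%N by apply/negP => /andP [? ?]; lia.
  by rewrite /G (negbTE hf) mul0r.
have e2 : \sum_(b <= j < M) G j = 0.
  rewrite big_nat big1 // => j /andP[h _].
  have hf : ~~ ((a <= j) && (j < b))%N by apply/negP => /andP [? ?]; lia.
  by rewrite /G (negbTE hf) mul0r.
rewrite e1 e2 add0r addr0.
apply: eq_big_nat => j /andP[h1 h2]; by rewrite /G h1 h2 /= mul1r.
Qed.

Section D.
Variable R : realType.
Local Notation C := R[i].
Variable alpha : cseq R.
Variable m : nat.
Variable kap : 'I_m.+1 -> nat.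
Hypothesis hsep : forall r r', r != r' -> sep (kap r) (kap r').

Definition Mb := (2 ^ (\max_(r < m.+1) kap r).+2)%N.

Lemma Mb_ge r : (2 ^ (kap r).+2 <= Mb)%N.
Proof. apply: pow_mono; rewrite ltnS; exact: (leq_bigmax r). Qed.

Definition x0 (v : 'I_m.+1 -> C) : cseq R := fun j => \sum_r v r * fk R (kap r) j.
Definition Wv (v : 'I_m.+1 -> C) : R := \sum_r cmod2 (v r) * (bb (kap r))%:R.

Lemma fk_suppM r j : (Mb <= j)%N -> fk R (kap r) j = 0.
Proof. move=> h; apply: fk_zero; exact: leq_trans (Mb_ge r) h. Qed.

Lemma x0_supp v j : (Mb <= j)%N -> x0 v j = 0.
Proof. by move=> h; rewrite /x0 big1 // => r _; rewrite fk_suppM // mulr0. Qed.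

Lemma x0_norm v : (sqnorm (x0 v) <= (2 * Wv v)%:E)%E.
Proof.
rewrite (sqnorm_supp _ _ _ (x0_supp v)) lee_fin.
apply: le_trans (_ : \sum_(0 <= j < Mb) \sum_r cmod2 (v r) * cmod2 (fk R (kap r) j) <= _).
  apply: ler_sum => j _; rewrite /x0 cmod2_sum_excl.
    by apply: ler_sum => r _; rewrite cmod2M.
  move=> r r' hrr' h1 h2; apply: (@fk_disj R _ _ j (hsep _ _ hrr')).
    by apply: contraNneq h1 => ->; rewrite mulr0.
  by apply: contraNneq h2 => ->; rewrite mulr0.
rewrite exchange_big /= /Wv mulr_sumr; apply: ler_sum => r _.
rewrite -mulr_sumr mulrCA; apply: ler_wpM2l; first exact: cmod2_ge0.
exact: fk_norm.
Qed.


Lemma Tx0_blk v r j : (2^(kap r) <= j < 2^(kap r).+1)%N ->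
  Ralpha alpha (x0 v) j = alpha j * (v r * (bb (kap r))%:R).
Proof.
move=> hj; rewrite /Ralpha /x0; congr (_ * _).
rewrite exchange_big /= (bigD1 r) //= [X in _ + X]big1 ?addr0.
  by rewrite -mulr_sumr Fk_blk.
move=> r' hr'; rewrite -mulr_sumr (@Fk_other R _ (kap r)) ?mulr0 //.
exact: hsep.
Qed.

Lemma LTx0 v r : Lf R alpha (kap r) (Ralpha alpha (x0 v)) =
  (v r * (bb (kap r))%:R) * (Ablk R alpha (kap r))%:C.
Proof.
rewrite /Lf /Ablk.
rewrite (@eq_big_nat _ _ _ _ _ _ (fun j => (v r * (bb (kap r))%:R) * (alpha j * conjc (alpha j)))); last first.
  by move=> j hj; rewrite (Tx0_blk v r) //; ring.
rewrite -mulr_sumr; congr (_ * _).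
rewrite rmorph_sum; apply: eq_bigr => j _; symmetry; exact: cmod2E.
Qed.

Lemma blocks_sum (y : cseq R) :
  \sum_r Yblk R (kap r) y <= \sum_(0 <= j < Mb) cmod2 (y j).
Proof.
have hM r : (2^(kap r).+1 <= Mb)%N.
  apply: leq_trans (Mb_ge r); apply: pow_mono; lia.
rewrite /Yblk.
under eq_bigr => r _ do rewrite (@sum_ind R _ _ _ Mb (pow_mono _ _ (leqnSn _)) (hM r)).
rewrite exchange_big /=; apply: ler_sum => j _.
rewrite -mulr_suml -[X in _ <= X]mul1r; apply: ler_wpM2r; first exact: cmod2_ge0.
apply: (@sum_excl R _ (fun r => ((2^(kap r) <= j) && (j < 2^(kap r).+1))%N)).
move=> r r' hrr' /andP[h1 h2] /andP[h3 h4].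
move: (hsep _ _ hrr') => /orP[h|h].
  have : (2^(kap r).+1 <= 2^(kap r'))%N by apply: pow_mono; lia.
  lia.
have : (2^(kap r').+1 <= 2^(kap r))%N by apply: pow_mono; lia.
lia.
Qed.


Local Open Scope classical_set_scope.
Lemma core_est (P : cseq R -> cseq R) (HP : l2_linear P) (c : R) (c0 : 0 <= c)
  (hc : forall r, c <= sigma alpha (kap r)) (v : 'I_m.+1 -> C)
  (hv : forall r, \sum_i v i * Lf R alpha (kap r) (P (fk R (kap i))) = 0)
  (hW : Wv v = 2^-1) :
  ((c/3)%:E <= opnorm (fun f => (Ralpha alpha f \- P f)%R))%E.
Proof.
set y := (fun j => Ralpha alpha (x0 v) j - P (x0 v) j).
have hfsupp : forall i j, (Mb <= j)%N -> fk R (kap i) j = 0.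
  by move=> i j h; exact: fk_suppM.
have hPx : P (x0 v) = fun j => \sum_i v i * P (fk R (kap i)) j.
  exact: (@lin_sum R P _ _ v (fun i => fk R (kap i)) Mb HP hfsupp).
have hLy r : Lf R alpha (kap r) y = (v r * (bb (kap r))%:R) * (Ablk R alpha (kap r))%:C.
  by rewrite /y LfB LTx0 hPx Lf_lin hv subr0.
have hY r : cmod2 (v r) * (bb (kap r))%:R * (c^+2 / 4) <= Yblk R (kap r) y.
  apply: le_trans (@blk_lower R alpha _ _ _ (hLy r)).
  rewrite cmod2M cmod2_nat.
  have hs := sigma_bound R alpha (kap r).
  have hcr := hc r.
  have hsg : 0 <= sigma alpha (kap r) by rewrite /sigma sqrtr_ge0.
  have h1 : c^+2 / 4 <= (bb (kap r))%:R * Ablk R alpha (kap r).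
    have : c ^+ 2 <= sigma alpha (kap r) ^+ 2 by rewrite lerXn2r // nnegrE.
    move=> h; lra.
  have hcv := cmod2_ge0 R (v r).
  have hb : (0 : R) <= (bb (kap r))%:R by rewrite ler0n.
  have -> : cmod2 (v r) * ((bb (kap r))%:R ^+ 2) * Ablk R alpha (kap r) =
     (cmod2 (v r) * (bb (kap r))%:R) * ((bb (kap r))%:R * Ablk R alpha (kap r)) by ring.
  by apply: ler_wpM2l => //; rewrite mulr_ge0.
have hsum : c^+2 / 8 <= \sum_(0 <= j < Mb) cmod2 (y j).
  apply: le_trans (blocks_sum y).
  apply: le_trans (ler_sum _ (fun r _ => hY r)).
  rewrite -mulr_suml -/(Wv v) hW; lra.
have hin : [set poweR (sqnorm ((fun f => Ralpha alpha f \- P f) f)) (2^-1) | f in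
    [set f | inl2 f /\ (sqnorm f <= 1)%E]] (poweR (sqnorm y) (2^-1)).
  exists (x0 v) => //; split; first exact: (inl2_supp _ _ _ (x0_supp v)).
  by apply: le_trans (x0_norm v) _; rewrite hW mulfV.
apply: le_trans (ereal_sup_ubound hin).
have hS : 0 <= \sum_(0 <= j < Mb) cmod2 (y j) by apply: sumr_ge0 => j _; exact: cmod2_ge0.
apply: le_trans (poweR_le R _ _ _ _ _ (sqnorm_ge R y Mb)); last 2 first.
- by rewrite invr_ge0.
- by rewrite lee_fin.
rewrite poweR_EFin lee_fin powR12_sqrt //.
rewrite -(ger0_norm (_ : 0 <= c / 3)); last by rewrite divr_ge0.
rewrite -sqrtr_sqr ler_sqrt //; lra.
Qed.

End D.

End PartD.
Import PartD.

Module PartE.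
Local Open Scope ring_scope.
Local Open Scope complex_scope.
Local Open Scope classical_set_scope.

Lemma bb_ge1 k : (1 <= bb k)%N.
Proof. have [? ? ? ? ?] := pow_facts k; rewrite /bb; lia. Qed.

Section E.
Variable R : realType.
Local Notation C := R[i].
Variable alpha : cseq R.
Variable m : nat.
Variable kap : 'I_m.+1 -> nat.
Hypothesis hsep : forall r r', r != r' -> sep (kap r) (kap r').

Lemma core_approx (c : R) (c0 : 0 <= c) (hc : forall r, c <= sigma alpha (kap r)) :
  ((c/3)%:E <= approx_num (Ralpha alpha) m)%E.
Proof.
rewrite /approx_num; apply: le_ereal_inf_tmp => _ [P [HP [g [hg hrank]]] <-].
have H : forall i : 'I_m.+1, exists cc : 'I_m -> C,
    P (fk R (kap i)) = fun k => \sum_l cc l * g l k.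
  move=> i; apply: hrank; apply: (inl2_supp _ _ (2^(kap i).+2)) => j hj.
  exact: fk_zero.
have [cc hcc] := boolp.choice H.
pose G : 'M[C]_(m, m.+1) := \matrix_(l, r) Lf R alpha (kap r) (g l).
pose Cm : 'M[C]_(m.+1, m) := \matrix_(i, l) cc i l.
pose N : 'M[C]_(m.+1) := \matrix_(i, r) Lf R alpha (kap r) (P (fk R (kap i))).
have hN : N = Cm *m G.
  apply/matrixP => i r; rewrite !mxE hcc Lf_lin; apply: eq_bigr => l _; by rewrite !mxE.
have hdet : \det N == 0.
  apply: contraT => hd.
  have : N \in unitmx by rewrite unitmxE unitfE.
  move/mxrank_unit; rewrite hN => hr.
  have := mxrankM_maxr Cm G; rewrite hr.
  have := rank_leq_row G; lia.
have [v0 hv0 hvN] := det0P hdet.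
pose w r := v0 0 r.
have [r0 hr0] : exists r, w r != 0.
  case: (pickP (fun r => w r != 0)) => [r hr|hn]; first by exists r.
  exfalso; move/eqP: hv0; apply; apply/rowP => j; rewrite mxE.
  by move/negbFE/eqP: (hn j).
have hW : 0 < Wv R m kap w.
  rewrite /Wv (bigD1 r0) //=.
  apply: (@lt_le_trans _ _ (cmod2 (w r0) * (bb (kap r0))%:R)).
    apply: mulr_gt0; last by rewrite ltr0n; exact: bb_ge1.
    rewrite lt_def cmod2_ge0 andbT; apply: contra hr0 => /eqP h; apply/eqP; exact: cmod2_eq0.
  rewrite lerDl; apply: sumr_ge0 => i _; apply: mulr_ge0; [exact: cmod2_ge0|exact: ler0n].
pose lam := Num.sqrt ((2 * Wv R m kap w)^-1).
pose v r := (lam%:C) * w r.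
apply: (@core_est R alpha m kap hsep P HP c c0 hc v).
  move=> r; rewrite /v.
  under eq_bigr do rewrite -mulrA.
  rewrite -mulr_sumr.
  have -> : \sum_i w i * Lf R alpha (kap r) (P (fk R (kap i))) = (v0 *m N) 0 r.
    by rewrite !mxE; apply: eq_bigr => i _; rewrite /N mxE.
  by rewrite hvN mxE mulr0.
rewrite /Wv /v.
under eq_bigr do rewrite cmod2M cmod2_real -mulrA.
rewrite -mulr_sumr -/(Wv R m kap w) /lam sqr_sqrtr; last by rewrite invr_ge0 mulr_ge0 // ltW.
by rewrite invfM -mulrA mulVf ?mulr1 // gt_eqF.
Qed.

End E.

End PartE.
Import PartE.

Module PartF.
Local Open Scope ring_scope.

Section F.
Variable R : realType.
Variable alpha : cseq R.
Variable p : R.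
Hypothesis hp : 0 < p.

Local Notation a n := (approx_num (Ralpha alpha) n).
Local Notation K := ((3 : R) `^ p).

Lemma min_ex (s : seq nat) : s != [::] ->
  exists2 k0, k0 \in s & forall k, k \in s -> sigma alpha k0 <= sigma alpha k.
Proof.
elim: s => [//|x s IH] _.
case: (eqVneq s [::]) => [->|hs].
  by exists x; rewrite ?mem_seq1 // => k; rewrite mem_seq1 => /eqP ->.
have [k1 hk1 hmin] := IH hs.
case: (leP (sigma alpha x) (sigma alpha k1)) => h.
  exists x; first by rewrite in_cons eqxx.
  move=> k; rewrite in_cons => /orP[/eqP ->//|hk]; exact: le_trans h (hmin k hk).
exists k1; first by rewrite in_cons hk1 orbT.
move=> k; rewrite in_cons => /orP[/eqP ->|hk]; [exact: ltW | exact: hmin].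
Qed.

Lemma comb n : forall s : seq nat, size s = n -> uniq s ->
  (forall x y, x \in s -> y \in s -> x != y -> sep x y) ->
  (\sum_(k <- s) poweR (sigma alpha k)%:E p <=
   \sum_(0 <= i < n) (K%:E * poweR (a i) p))%E.
Proof.
elim: n => [|n IH] s hsz hu hs.
  by move/size0nil: hsz => ->; rewrite big_nil big_geq.
have hne : s != [::] by apply/eqP => h; rewrite h in hsz.
have [k0 hk0 hmin] := min_ex s hne.
rewrite (perm_big _ (perm_to_rem hk0)) big_cons big_nat_recr //= addeC.
apply: leeD.
  apply: IH.
  - by rewrite size_rem // hsz.
  - exact: rem_uniq.
  - move=> x y hx hy; apply: hs; exact: (mem_rem hx) || exact: (mem_rem hy).
have hsz' : (0 < size s)%N by rewrite hsz.
pose kap (i : 'I_n.+1) := nth 0%N s i.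
have hsep : forall r r', r != r' -> sep (kap r) (kap r').
  move=> r r' hrr'; apply: hs; rewrite /kap ?mem_nth ?hsz //.
  by rewrite nth_uniq ?hsz.
have hc : forall r, sigma alpha k0 <= sigma alpha (kap r).
  by move=> r; apply: hmin; rewrite /kap mem_nth ?hsz.
have hs0 : 0 <= sigma alpha k0 by rewrite /sigma sqrtr_ge0.
have hcore := @core_approx R alpha n kap hsep _ hs0 hc.
have -> : sigma alpha k0 = 3 * (sigma alpha k0 / 3) by field.
rewrite powRM ?divr_ge0 // EFinM -poweR_EFin.
apply: lee_wpmul2l; first by rewrite lee_fin powR_ge0.
rewrite -poweR_EFin; apply: (poweR_le R); [exact: ltW | by rewrite lee_fin divr_ge0 | exact: hcore].
Qed.

End F.

End PartF.
Import PartF.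

Theorem theorem5p5 (R : realType) (p : R) (hp : 0 < p) :
  exists C : R, forall alpha : cseq R, inl2 alpha ->
    (lpnorm p (fun k => (sigma alpha k)%:E)
      <= C%:E * lpnorm p (fun k => approx_num (Ralpha alpha) k))%E.
Proof.
exists ((3 * (3 : R) `^ p) `^ p^-1) => alpha _.
set K := (3 : R) `^ p.
have K0 : 0 < K by rewrite powR_gt0.
set G := fun n => (K%:E * poweR (approx_num (Ralpha alpha) n) p)%E.
set Sa := (\sum_(0 <= k <oo) poweR (approx_num (Ralpha alpha) k) p)%E.
set Z := (\sum_(0 <= k <oo) G k)%E.
have G0 n : (0 <= G n)%E by rewrite /G mule_ge0 ?lee_fin ?(ltW K0) ?poweR_ge0.
have hpart : forall Q : pred nat, (forall x y, Q x -> Q y -> x != y -> sep x y) ->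
    forall N, (\sum_(0 <= k < N | Q k) poweR (sigma alpha k)%:E p <= Z)%E.
  move=> Q hQ N; rewrite -big_filter.
  set s := [seq x <- index_iota 0 N | Q x].
  apply: le_trans (@comb R alpha p hp (size s) s erefl _ _) _.
  - by rewrite filter_uniq // iota_uniq.
  - move=> x y; rewrite !mem_filter => /andP[hx _] /andP[hy _]; exact: hQ.
  by apply: nneseries_lim_ge => i _ _; exact: G0.
have hN N : (\sum_(0 <= k < N) poweR (sigma alpha k)%:E p <= Z + Z + Z)%E.
  rewrite (bigID (fun k => (k %% 3 == 0)%N)) /=.
  rewrite [X in (_ + X)%E](bigID (fun k => (k %% 3 == 1)%N)) /= addeA.
  apply: leeD; first apply: leeD; apply: hpart.
  - by move=> x y /eqP hx /eqP hy /eqP hxy; rewrite /sep; lia.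
  - by move=> x y /andP[/eqP hx1 /eqP hx2] /andP[/eqP hy1 /eqP hy2] /eqP hxy; rewrite /sep; lia.
  - by move=> x y /andP[/eqP hx1 /eqP hx2] /andP[/eqP hy1 /eqP hy2] /eqP hxy; rewrite /sep; lia.
have hS : (\sum_(0 <= k <oo) poweR (sigma alpha k)%:E p <= Z + Z + Z)%E.
  apply: lime_le; first by apply: is_cvg_nneseries => n _ _; exact: poweR_ge0.
  by apply: nearW => N; exact: hN.
have Sa0 : (0 <= Sa)%E by apply: nneseries_ge0 => n _ _; exact: poweR_ge0.
have hZ : Z = (K%:E * Sa)%E by rewrite /Z /G nneseriesZl // => n _; exact: poweR_ge0.
clearbody K.
have hZ3 : (Z + Z + Z = (3 * K)%:E * Sa)%E.
  rewrite hZ; clear hZ hS; move: Sa Sa0 => [s| |] // _.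
    by rewrite -!EFinM -!EFinD; congr EFin; ring.
  have K3 : 0 < 3 * K by rewrite mulr_gt0.
  have my : forall r : R, 0 < r -> (r%:E * +oo = +oo)%E.
    by move=> r hr; rewrite mulry gtr0_sg // mul1e.
  by rewrite !my.
rewrite /lpnorm.
apply: le_trans (poweR_le R _ _ _ _ _ hS) _.
- by rewrite invr_ge0 ltW.
- by apply: nneseries_ge0 => n _ _; exact: poweR_ge0.
rewrite hZ3 poweRM ?lee_fin ?mulr_ge0 //; last exact: ltW.
Qed.
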